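(* Consider the slotted transmission system and transmission policy $P$ described in the context, with loss probability $p\in(0,1)$, feedback delay $d\ge0$ and threshold $\gamma>0$. Suppose that $|\hat{Q}^r_k-Q^r_k|\le\delta$ for all $k$ and some $\delta\ge0$, and that there is $\epsilon>0$ with $E[S_k\mid\hat{Q}^r_k]\ge\epsilon$ whenever $\hat{Q}^r_k\le\gamma$. Let $\hat{S}_k:=1-C_k$ (so $S_k\le\hat{S}_k$) and $\hat{s}_k:=\frac1k\sum_{i=1}^k\hat{S}_i$. Then, as $k\to\infty$, $$E[\hat{s}_k]\ge(1-p)-\frac{\tfrac12+\delta+(1+\delta)(1-p)}{\gamma}.$$
   Context: Time is slotted, slots $k=1,2,\dots$; each slot carries at most one packet transmission over a lossy path. Information packets arrive at the transmitter according to $A_k\in\{0,1\}$ and are held in a transmitter queue $Q^t_{k+1}=[Q^t_k+A_k-S_k]^+$, $Q^t_1=0$, where $[x]^+=\max\{x,0\}$. In slot $k$, $S_k\in\{0,1\}$ indicates that an information packet is sent and $C_k\in\{0,1\}$ indicates that a coded packet is sent ($S_k+C_k\le1$). Erasures: $X_k=1$ if the packet sent in slot $k$ is erased and $0$ otherwise; $\{X_k\}$ is i.i.d. with $\Pr(X_k=1)=p$, independent of the transmitter's decisions and queue state up to slot $k$. The virtual receiver queue evolves as $Q^r_{k+1}=[Q^r_k+S_kX_k-C_k(1-X_k)]^+$ (non-negative integer valued). Feedback reaches the transmitter with delay $d$ slots, so in slot $k$ the transmitter knows $Q^r_{k-d}$ (quantities with non-positive indices are given initial values). The estimator is $\hat{Q}^r_k=Q^r_{k-d}+\sum_{j=k-d}^{k-1}(S_jp-C_j(1-p))$.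 Transmission policy $P$ with parameter $\gamma$: $C_k\in\arg\min_{C\in\{0,1\}}(-\hat{Q}^r_k+\gamma)C$ and $S_k=\min\{Q^t_k+A_k,\,1-C_k\}$. Expectations are over the arrival and loss processes. *)

(* Defs.v *)
From HB Require Import structures.
From mathcomp Require Import all_boot all_order all_algebra.
From mathcomp Require Import all_classical all_reals all_analysis.
Set Implicit Arguments. Unset Strict Implicit. Unset Printing Implicit Defensive.
Import Order.TTheory GRing.Theory Num.Theory.
Local Open Scope ring_scope.

(* Pathwise (deterministic) description of the slotted system and of the
   transmission policy P.  Slots are k = 1,2,...; index 0 is a dummy slot
   where every quantity is 0 (initial values of non-positive indices are 0).
   A history [h : seq (bool*bool)] stores h`_j = (S_j, C_j). *)
Section Policy.
Variable R : realType.
Variables (p gamma : R) (d : nat) (a x : nat -> bool).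
(* a j = A_j (arrival in slot j), x j = X_j (erasure in slot j) *)

Definition Sof (h : seq (bool * bool)) (j : nat) : bool := (nth (false, false) h j).1.
Definition Cof (h : seq (bool * bool)) (j : nat) : bool := (nth (false, false) h j).2.

(* Q^t_1 = 0, Q^t_{k+1} = [Q^t_k + A_k - S_k]^+ (truncated nat subtraction) *)
Fixpoint Qt_of (h : seq (bool * bool)) (k : nat) : nat :=
  match k with
  | 0 => 0
  | k'.+1 => if k' is 0 then 0 else (Qt_of h k' + a k' - Sof h k')%N
  end.

(* Q^r_0 = Q^r_1 = 0, Q^r_{k+1} = [Q^r_k + S_k X_k - C_k (1 - X_k)]^+ *)
Fixpoint Qr_of (h : seq (bool * bool)) (k : nat) : nat :=
  match k with
  | 0 => 0
  | k'.+1 => if k' is 0 then 0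
             else (Qr_of h k' + (Sof h k' && x k') - (Cof h k' && ~~ x k'))%N
  end.

(* \hat Q^r_k = Q^r_{k-d} + sum_{j=k-d}^{k-1} (S_j p - C_j (1-p)),
   with all quantities of non-positive index equal to 0 *)
Definition Qhat_of (h : seq (bool * bool)) (k : nat) : R :=
  (Qr_of h (k - d))%:R +
  \sum_((k - d)%N <= j < k) ((Sof h j)%:R * p - (Cof h j)%:R * (1 - p)).

(* decision in slot k: C_k = 1 iff (-\hat Q^r_k + gamma) < 0 (ties -> C_k = 0),
   S_k = min(Q^t_k + A_k, 1 - C_k) *)
Definition dec (h : seq (bool * bool)) (k : nat) : bool * bool :=
  let c := gamma < Qhat_of h k in
  (~~ c && (0 < Qt_of h k + a k)%N, c).

(* traj k = [:: (S_0,C_0); (S_1,C_1); ...; (S_k,C_k)] *)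
Fixpoint traj (k : nat) : seq (bool * bool) :=
  match k with
  | 0 => [:: (false, false)]
  | k'.+1 => let h := traj k' in rcons h (dec h k'.+1)
  end.

Definition Sk (k : nat) : bool := Sof (traj k) k.
Definition Ck (k : nat) : bool := Cof (traj k) k.
Definition Qtk (k : nat) : nat := Qt_of (traj k) k.
Definition Qrk (k : nat) : nat := Qr_of (traj k) k.
Definition Qhatk (k : nat) : R := Qhat_of (traj k) k.

End Policy.

Definition S_rv (R : realType) (T : Type) (p gamma : R) (d : nat)
  (A X : nat -> T -> bool) (k : nat) (w : T) : bool :=
  Sk p gamma d (A ^~ w) (X ^~ w) k.
Definition C_rv (R : realType) (T : Type) (p gamma : R) (d : nat)
  (A X : nat -> T -> bool) (k : nat) (w : T) : bool :=
  Ck p gamma d (A ^~ w) (X ^~ w) k.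
Definition Qt_rv (R : realType) (T : Type) (p gamma : R) (d : nat)
  (A X : nat -> T -> bool) (k : nat) (w : T) : nat :=
  Qtk p gamma d (A ^~ w) (X ^~ w) k.
Definition Qr_rv (R : realType) (T : Type) (p gamma : R) (d : nat)
  (A X : nat -> T -> bool) (k : nat) (w : T) : nat :=
  Qrk p gamma d (A ^~ w) (X ^~ w) k.
Definition Qhat_rv (R : realType) (T : Type) (p gamma : R) (d : nat)
  (A X : nat -> T -> bool) (k : nat) (w : T) : R :=
  Qhatk p gamma d (A ^~ w) (X ^~ w) k.

(* Main.v *)
Require Import Defs.
From HB Require Import structures.
From mathcomp Require Import all_boot all_order all_algebra.
From mathcomp Require Import all_classical all_reals all_analysis.
From mathcomp Require Import zify ring lra.
Import Order.TTheory GRing.Theory Num.Theory.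
Local Open Scope classical_set_scope.
Local Open Scope ring_scope.

Section Det.
Variable R : realType.
Variables (p gamma : R) (d : nat).

Lemma size_traj a x k : size (traj p gamma d a x k) = k.+1.
Proof. by elim: k => //= k IH; rewrite size_rcons IH. Qed.

Lemma traj_nthS a x k j : (j <= k)%N ->
  nth (false,false) (traj p gamma d a x k.+1) j = nth (false,false) (traj p gamma d a x k) j.
Proof. by move=> hj /=; rewrite nth_rcons size_traj ltnS hj. Qed.

Lemma traj_nth a x k n j : (j <= k)%N ->
  nth (false,false) (traj p gamma d a x (n + k)) j = nth (false,false) (traj p gamma d a x k) j.
Proof.
move=> hj; elim: n => // n IH; rewrite addSn traj_nthS //.
by rewrite (leq_trans hj) // leq_addl.
Qed.

Lemma Qr_ext x h h' m : (forall j, (j < m)%N -> nth (false,false) h j = nth (false,false) h' j) ->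
  Qr_of x h m = Qr_of x h' m.
Proof.
elim: m => // m IH H /=; case: m IH H => // m IH H.
rewrite IH; last by move=> j hj; apply: H; apply: ltnW.
by rewrite /Sof /Cof H.
Qed.

Lemma Qt_ext a h h' m : (forall j, (j < m)%N -> nth (false,false) h j = nth (false,false) h' j) ->
  Qt_of a h m = Qt_of a h' m.
Proof.
elim: m => // m IH H /=; case: m IH H => // m IH H.
rewrite IH; last by move=> j hj; apply: H; apply: ltnW.
by rewrite /Sof H.
Qed.

Lemma Qhat_ext x h h' m : (forall j, (j < m)%N -> nth (false,false) h j = nth (false,false) h' j) ->
  Qhat_of p d x h m = Qhat_of p d x h' m.
Proof.
move=> H; rewrite /Qhat_of (@Qr_ext x h h'); last first.
  by move=> j hj; apply: H; apply: (leq_trans hj); apply: leq_subr.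
congr (_ + _); rewrite !big_seq; apply: eq_bigr => j; rewrite mem_index_iota => /andP[_ hj].
by rewrite /Sof /Cof H.
Qed.

Lemma Qr_xext x x' h m : (forall j, (j < m)%N -> x j = x' j) -> Qr_of x h m = Qr_of x' h m.
Proof.
elim: m => // m IH H /=; case: m IH H => // m IH H.
by rewrite IH ?H // => j hj; apply: H; apply: ltnW.
Qed.

Lemma Qt_aext a a' h m : (forall j, (j < m)%N -> a j = a' j) -> Qt_of a h m = Qt_of a' h m.
Proof.
elim: m => // m IH H /=; case: m IH H => // m IH H.
by rewrite IH ?H // => j hj; apply: H; apply: ltnW.
Qed.

Lemma Qhat_xext x x' h m : (forall j, (j < m)%N -> x j = x' j) ->
  Qhat_of p d x h m = Qhat_of p d x' h m.
Proof.
move=> H; rewrite /Qhat_of (@Qr_xext x x') // => j hj; apply: H.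
by apply: (leq_trans hj); apply: leq_subr.
Qed.

Lemma traj_ext a x a' x' k : (forall j, (j <= k)%N -> a j = a' j /\ x j = x' j) ->
  traj p gamma d a x k = traj p gamma d a' x' k.
Proof.
elim: k => // k IH H /=.
rewrite IH; last by move=> j hj; apply: H; apply: (leq_trans hj).
rewrite /dec (@Qhat_xext x x'); last by move=> j hj; case: (H j (ltnW hj)).
rewrite (@Qt_aext a a'); last by move=> j hj; case: (H j (ltnW hj)).
by case: (H k.+1 (leqnn _)) => ->.
Qed.

Lemma Qrk1 a x : Qrk p gamma d a x 1 = 0%N.
Proof. by []. Qed.

Lemma trajS a x k : traj p gamma d a x k.+1 =
  rcons (traj p gamma d a x k) (dec p gamma d a x (traj p gamma d a x k) k.+1).
Proof. by []. Qed.

Lemma Qr_ofS x h m : Qr_of x h m.+2 =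
  (Qr_of x h m.+1 + (Sof h m.+1 && x m.+1) - (Cof h m.+1 && ~~ x m.+1))%N.
Proof. by []. Qed.

Lemma QrkS a x k : Qrk p gamma d a x k.+2 =
  (Qrk p gamma d a x k.+1 + (Sk p gamma d a x k.+1 && x k.+1)
     - (Ck p gamma d a x k.+1 && ~~ x k.+1))%N.
Proof.
rewrite /Qrk /Sk /Ck Qr_ofS /Sof /Cof traj_nthS //.
rewrite (@Qr_ext x (traj p gamma d a x k.+2) (traj p gamma d a x k.+1)) //.
by move=> j hj; rewrite traj_nthS // ltnW.
Qed.

Lemma CkE a x k : Ck p gamma d a x k.+1 = (gamma < Qhatk p gamma d a x k.+1).
Proof.
rewrite /Ck /Qhatk {1}trajS /Cof nth_rcons size_traj ltnn eqxx /=.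
rewrite (@Qhat_ext x (traj p gamma d a x k.+1) (traj p gamma d a x k)) //.
by move=> j hj; rewrite traj_nthS.
Qed.

Lemma SkC a x k : Sk p gamma d a x k.+1 -> ~~ Ck p gamma d a x k.+1.
Proof.
by rewrite /Ck /Sk trajS /Cof /Sof nth_rcons size_traj ltnn eqxx /= => /andP[].
Qed.

Lemma Sk_ext a x a' x' k : (forall j, (j <= k)%N -> a j = a' j /\ x j = x' j) ->
  [/\ Sk p gamma d a x k = Sk p gamma d a' x' k, Ck p gamma d a x k = Ck p gamma d a' x' k,
      Qtk p gamma d a x k = Qtk p gamma d a' x' k & Qrk p gamma d a x k = Qrk p gamma d a' x' k].
Proof.
move=> H; rewrite /Sk /Ck /Qtk /Qrk (@traj_ext a x a' x' k H).
rewrite (@Qt_aext a a') ?(@Qr_xext x x') //.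
- by move=> j hj; case: (H j (ltnW hj)).
- by move=> j hj; case: (H j (ltnW hj)).
Qed.

Lemma path_sum a x delta : delta <= gamma ->
  (forall k, (1 <= k)%N -> `|Qhatk p gamma d a x k - (Qrk p gamma d a x k)%:R| <= delta) ->
  forall K, (Qrk p gamma d a x K.+1 + \sum_(1 <= i < K.+1) (Ck p gamma d a x i && ~~ x i) =
             \sum_(1 <= i < K.+1) (Sk p gamma d a x i && x i))%N.
Proof.
move=> dg Hd; elim=> [|K IH]; first by rewrite !big_geq.
rewrite big_nat_recr // [in RHS]big_nat_recr // QrkS -IH /=.
case E: (Ck p gamma d a x K.+1 && ~~ x K.+1); last by rewrite subn0 /=; lia.
have : (0 < Qrk p gamma d a x K.+1)%N.
  move/andP: E => [/[!CkE] hC _].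
  have := Hd K.+1 isT; rewrite ler_norml => /andP[_ h].
  rewrite -(ltr_nat R); apply: (@lt_le_trans _ _ (Qhatk p gamma d a x K.+1 - delta)).
    by rewrite subr_gt0 (le_lt_trans dg).
  by rewrite lerBlDr -lerBlDl.
move=> hq /=; lia.
Qed.

End Det.
Lemma bigU_memP (T : Type) (I : eqType) (r : seq I) (Pr : pred I) (F : I -> set T) w :
  (\big[setU/set0]_(i <- r | Pr i) F i) w <-> exists i, [/\ i \in r, Pr i & F i w].
Proof.
elim: r => [|i r IH]; first by rewrite big_nil; split => // -[? []].
rewrite big_cons; case: ifP => Hi.
  split.
    case => [Fw|/IH [j [jr Pj Fj]]]; first by exists i; rewrite mem_head.
    by exists j; rewrite in_cons jr orbT.
  move=> [j []]; rewrite in_cons => /orP [/eqP -> _ Fw|jr Pj Fj]; first by left.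
  by right; apply/IH; exists j.
split.
  by move/IH => [j [jr Pj Fj]]; exists j; rewrite in_cons jr orbT.
move=> [j []]; rewrite in_cons => /orP[/eqP -> |jr Pj Fj]; first by rewrite Hi.
by apply/IH; exists j.
Qed.

Lemma bigI_memP (T : Type) (I : eqType) (r : seq I) (F : I -> set T) w :
  (\big[setI/setT]_(i <- r) F i) w <-> forall i, i \in r -> F i w.
Proof.
elim: r => [|i r IH]; first by rewrite big_nil.
rewrite big_cons; split.
  move=> [Fi /IH H] j; rewrite in_cons => /orP[/eqP -> //|]; exact: H.
move=> H; split; first by apply: H; rewrite mem_head.
by apply/IH => j jr; apply: H; rewrite in_cons jr orbT.
Qed.

Section Meas.
Variables (R : realType) (dT : measure_display) (T : measurableType dT).
Variables (P : probability T R) (A X : nat -> T -> bool).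
Hypotheses (hA : forall k, measurable [set w | A k w]) (hX : forall k, measurable [set w | X k w]).

Lemma measb (B : T -> bool) b : measurable [set w | B w] -> measurable [set w | B w == b].
Proof.
move=> hB; case: b.
  by rewrite (_ : [set w | B w == true] = [set w | B w]) //; apply/seteqP; split => w /=;
    case: (B w).
rewrite (_ : [set w | B w == false] = ~` [set w | B w]); first exact: measurableC.
by apply/seteqP; split => w /=; case: (B w).
Qed.

Lemma meas_det n (Q : (nat -> bool) -> (nat -> bool) -> bool) :
  (forall a x a' x', (forall j, (j <= n)%N -> a j = a' j /\ x j = x' j) -> Q a x = Q a' x') ->
  measurable [set w | Q (A ^~ w) (X ^~ w)].
Proof.
move=> HQ.
pose ra (u : {ffun 'I_n.+1 -> bool * bool}) j := if (j < n.+1)%N then (u (inord j)).1 else false.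
pose rx (u : {ffun 'I_n.+1 -> bool * bool}) j := if (j < n.+1)%N then (u (inord j)).2 else false.
pose cell (u : {ffun 'I_n.+1 -> bool * bool}) :=
  \big[setI/setT]_(j <- enum 'I_n.+1) [set w | (A j w, X j w) == u j].
have -> : [set w | Q (A ^~ w) (X ^~ w)] =
    \big[setU/set0]_(u <- enum {ffun 'I_n.+1 -> bool * bool} | Q (ra u) (rx u)) cell u.
  apply/seteqP; split => w /=.
  - move=> Qw; apply/bigU_memP; exists [ffun j : 'I_n.+1 => (A j w, X j w)]; split.
    + by rewrite mem_enum.
    + rewrite (HQ _ _ (A^~w) (X^~w)) // => j hj.
      by rewrite /ra /rx ltnS hj !ffunE /= inordK.
    + by apply/bigI_memP => j _; rewrite /= ffunE.
  - move=> /bigU_memP [u [_ Qu /bigI_memP cw]].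
    rewrite -(HQ (ra u) (rx u)) // => j hj.
    have := cw (inord j) (mem_enum _ _); rewrite /= inordK ?ltnS // => /eqP E.
    by rewrite /ra /rx ltnS hj -E.
apply: bigsetU_measurable => u _; apply: bigsetI_measurable => j _.
rewrite (_ : [set w | (A j w, X j w) == u j] =
   [set w | A j w == (u j).1] `&` [set w | X j w == (u j).2]).
  by apply: measurableI; apply: measb.
apply/seteqP; split => w /=; case: (u j) => b c /=; rewrite xpair_eqE.
  by move/andP.
by case=> -> ->.
Qed.

Lemma meas_in (V : eqType) (Phi : T -> V) (s : seq V) :
  (forall v, measurable [set w | Phi w == v]) -> measurable [set w | Phi w \in s].
Proof.
move=> H; elim: s => [|v s IH].
  by rewrite (_ : [set w | _] = set0) //; apply/seteqP; split => w.
rewrite (_ : [set w | _] = [set w | Phi w == v] `|` [set w | Phi w \in s]).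
  exact: measurableU.
by apply/seteqP; split => w /=; rewrite in_cons => /orP.
Qed.

Lemma sum_part (V : eqType) (Phi : T -> V) (s : seq V) (D : set T) :
  uniq s -> measurable D -> (forall v, measurable [set w | Phi w == v]) ->
  P (D `&` [set w | Phi w \in s]) = (\sum_(v <- s) P (D `&` [set w | Phi w == v]))%E.
Proof.
move=> + hD H; elim: s => [|v s IH].
  rewrite big_nil (_ : _ `&` _ = set0) ?measure0 //.
  by apply/seteqP; split => w // [].
rewrite cons_uniq => /andP[vs us]; rewrite big_cons -IH //.
rewrite -measureU; first last.
- apply/seteqP; split => w // [[_ /eqP E] [_ /=]]; rewrite E => vs'.
  by move: vs; rewrite vs'.
- by apply: measurableI => //; exact: meas_in.
- by apply: measurableI => //; exact: H.
congr (P _); apply/seteqP; split => w /=.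
  by move=> [Dw]; rewrite in_cons => /orP[E|E]; [left|right].
by move=> [[Dw E]|[Dw E]]; split => //; rewrite in_cons ?E ?orbT.
Qed.

Lemma int_sum (I : Type) (s : seq I) (c : I -> R) (b : I -> T -> bool) :
  (forall i, 0 <= c i) -> (forall i, measurable [set w | b i w]) ->
  (\int[P]_w ((\sum_(i <- s) c i * (b i w)%:R)%:E) =
   (\sum_(i <- s) c i * fine (P [set w | b i w]))%:E)%E.
Proof.
move=> c0 hb.
have ind i w : c i * (b i w)%:R = c i * \1_[set w | b i w] w.
  rewrite indicE; case E: (b i w).
    by rewrite mem_set.
  by rewrite memNset //= E.
under eq_integral => w _ do rewrite -sumEFin.
rewrite ge0_integral_sum //; last first.
- by move=> i w _; rewrite lee_fin mulr_ge0.
- move=> i; apply/measurable_realfun.measurable_EFinP.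
  under eq_fun => w do rewrite ind.
  apply: measurable_realfun.measurable_funM => //; exact: measurable_realfun.measurable_indic.
rewrite -sumEFin; apply: eq_bigr => i _.
under eq_integral => w _ do rewrite ind.
rewrite (integralZl_indic _ (fun _ => [set w | b i w])) //; last first.
  by move=> ci; have := c0 i; rewrite leNgt ci.
rewrite integral_indic // setIT EFinM fineK //.
exact: fin_num_measure.
Qed.

Lemma meas_bool (b : T -> bool) : measurable [set w | b w] ->
  measurable_fun setT (fun w => ((b w)%:R : R)).
Proof.
move=> hb; rewrite (_ : (fun w => _) = \1_[set w | b w]).
  exact: measurable_realfun.measurable_indic.
apply/funext => w; rewrite indicE; case E: (b w).
  by rewrite mem_set.
by rewrite memNset //= E.
Qed.

End Meas.

Section Indep.
Variables (R : realType) (dT : measure_display) (T : measurableType dT).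
Variables (P : probability T R) (A X : nat -> T -> bool).
Variables (p gamma : R) (d : nat).
Hypotheses (hA : forall k, measurable [set w | A k w]) (hX : forall k, measurable [set w | X k w]).
Hypothesis Hind : forall (k : nat) (sv cv : nat -> bool) (qt qr : nat -> nat), (1 <= k)%N ->
     let B := [set w | forall j, (1 <= j <= k)%N ->
                 [/\ S_rv p gamma d A X j w = sv j, C_rv p gamma d A X j w = cv j,
                     Qt_rv p gamma d A X j w = qt j & Qr_rv p gamma d A X j w = qr j]] in
     P ([set w | X k w] `&` B) = (p%:E * P B)%E.

Definition Phi' k a x : seq (bool * bool * nat * nat) :=
  [seq (Sk p gamma d a x j, Ck p gamma d a x j, Qtk p gamma d a x j, Qrk p gamma d a x j)
  | j <- iota 1 k].

Lemma Phi'_ext k a x a' x' : (forall j, (j <= k)%N -> a j = a' j /\ x j = x' j) ->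
  Phi' k a x = Phi' k a' x'.
Proof.
move=> H; apply/eq_in_map => j; rewrite mem_iota => /andP[_ hj].
have [-> -> -> ->] := @Sk_ext R p gamma d a x a' x' j
  (fun i hi => H i (leq_trans hi (hj : (j <= k)%N))).
by [].
Qed.

Definition d0 : bool * bool * nat * nat := (false, false, 0%N, 0%N).

Lemma nth_Phi' k a x j : (1 <= j <= k)%N ->
  nth d0 (Phi' k a x) j.-1 =
  (Sk p gamma d a x j, Ck p gamma d a x j, Qtk p gamma d a x j, Qrk p gamma d a x j).
Proof.
case/andP=> j1 jk; rewrite /Phi' (nth_map 0%N); last by rewrite size_iota; lia.
by rewrite nth_iota; [rewrite add1n prednK|lia].
Qed.

Lemma size_Phi' k a x : size (Phi' k a x) = k.
Proof. by rewrite size_map size_iota. Qed.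

Lemma fin_range n (V : eqType) (F : (nat -> bool) -> (nat -> bool) -> V) :
  (forall a x a' x', (forall j, (j <= n)%N -> a j = a' j /\ x j = x' j) -> F a x = F a' x') ->
  exists L : seq V, uniq L /\ forall w, F (A ^~ w) (X ^~ w) \in L.
Proof.
move=> HF.
pose ra (u : {ffun 'I_n.+1 -> bool * bool}) j := if (j < n.+1)%N then (u (inord j)).1 else false.
pose rx (u : {ffun 'I_n.+1 -> bool * bool}) j := if (j < n.+1)%N then (u (inord j)).2 else false.
exists (undup [seq F (ra u) (rx u) | u <- enum {ffun 'I_n.+1 -> bool * bool}]).
split; first exact: undup_uniq.
move=> w; rewrite mem_undup.
apply/mapP; exists [ffun j : 'I_n.+1 => (A j w, X j w)]; first by rewrite mem_enum.
apply: HF => j hj; by rewrite /ra /rx ltnS hj !ffunE /= inordK.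
Qed.

Lemma meas_ev i (f : bool -> bool -> bool -> bool) :
  measurable [set w | f (S_rv p gamma d A X i w) (C_rv p gamma d A X i w) (X i w)].
Proof.
apply: (@meas_det dT T A X hA hX i
  (fun a x => f (Sk p gamma d a x i) (Ck p gamma d a x i) (x i))).
move=> a x a' x' H.
have [-> -> _ _] := @Sk_ext R p gamma d a x a' x' i H.
by case: (H i (leqnn i)) => _ ->.
Qed.

Lemma indep k (f : seq (bool * bool * nat * nat) -> bool) : (1 <= k)%N ->
  P ([set w | X k w] `&` [set w | f (Phi' k (A ^~ w) (X ^~ w))]) =
  (p%:E * P [set w | f (Phi' k (A ^~ w) (X ^~ w))])%E.
Proof.
move=> k1.
pose Phi w := Phi' k (A ^~ w) (X ^~ w).
have mPhi v : measurable [set w | Phi w == v].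
  apply: (@meas_det dT T A X hA hX k (fun a x => Phi' k a x == v)).
  by move=> a x a' x' H; rewrite (@Phi'_ext k a x a' x' H).
have mE : measurable [set w | f (Phi w)].
  apply: (@meas_det dT T A X hA hX k (fun a x => f (Phi' k a x))).
  by move=> a x a' x' H; rewrite (@Phi'_ext k a x a' x' H).
have [L0 [uL0 HL0]] := @fin_range k _ (Phi' k)
  (fun a x a' x' H => @Phi'_ext k a x a' x' H).
pose L := [seq v <- L0 | size v == k].
have uL : uniq L by exact: filter_uniq.
have HL w : Phi w \in L by rewrite mem_filter size_Phi' eqxx HL0.
have cover D : measurable D -> P D = (\sum_(v <- L) P (D `&` [set w | Phi w == v]))%E.
  move=> hD; rewrite -sum_part //; congr (P _); apply/seteqP; split => w.
    by move=> Dw; split => //; exact: HL.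
  by case.
rewrite (cover _ (measurableI _ _ (hX k) mE)) (cover _ mE) ge0_sume_distrr; last first.
  by move=> v _; exact: measure_ge0.
rewrite !big_seq; apply: eq_bigr => v; rewrite mem_filter => /andP[/eqP szv _].
case fv: (f v); last first.
  have -> : [set w | X k w] `&` [set w | f (Phi w)] `&` [set w | Phi w == v] = set0.
    by apply/seteqP; split => w // [[_ /= +] /eqP E]; rewrite E fv.
  have -> : [set w | f (Phi w)] `&` [set w | Phi w == v] = set0.
    by apply/seteqP; split => w // [/= + /eqP E]; rewrite E fv.
  by rewrite measure0 mule0.
have -> : [set w | X k w] `&` [set w | f (Phi w)] `&` [set w | Phi w == v] =
          [set w | X k w] `&` [set w | Phi w == v].
  apply/seteqP; split => w; first by case=> [[]].
  by case=> Xw /= Ew; split => //; split => //=; rewrite (eqP Ew).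
have -> : [set w | f (Phi w)] `&` [set w | Phi w == v] = [set w | Phi w == v].
  apply/seteqP; split => w; first by case.
  by move=> /= Ew; split => //=; rewrite (eqP Ew).
pose sv j := (nth d0 v j.-1).1.1.1.
pose cv j := (nth d0 v j.-1).1.1.2.
pose qt j := (nth d0 v j.-1).1.2.
pose qr j := (nth d0 v j.-1).2.
have := Hind k sv cv qt qr k1; rewrite /=.
have -> // : [set w | forall j, (1 <= j <= k)%N ->
                 [/\ S_rv p gamma d A X j w = sv j, C_rv p gamma d A X j w = cv j,
                     Qt_rv p gamma d A X j w = qt j & Qr_rv p gamma d A X j w = qr j]] =
             [set w | Phi w == v].
apply/seteqP; split => w /=.
  move=> H; apply/eqP; apply: (eq_from_nth (x0 := d0)); first by rewrite size_Phi' szv.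
  move=> i; rewrite size_Phi' => ik.
  have := H i.+1; rewrite ltnS ik => /(_ isT) [].
  rewrite /Phi -[i]/(i.+1.-1) nth_Phi' ?ltnS ?ik //.
  rewrite /S_rv /C_rv /Qt_rv /Qr_rv /sv /cv /qt /qr /= => -> -> -> ->.
  by case: (nth d0 v i) => [[[]]].
move=> /eqP Ew j hj.
by rewrite /sv /cv /qt /qr -Ew /Phi nth_Phi'.
Qed.

End Indep.

Lemma einf_ge (R : realType) (u : (\bar R)^nat) (l : \bar R) :
  (forall n, (1 <= n)%N -> (l <= u n)%E) -> (l <= limn_einf u)%E.
Proof.
move=> H; rewrite limn_einf_lim.
rewrite (cvg_lim _ (cvg_einfs_sup (u:=u))) //.
apply: (le_trans _ (ereal_sup_ubound _)); last by exists 1%N.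
rewrite /einfs /=.
apply/ereal_infP => _ [k /= hk <-]; exact: H.
Qed.

Theorem theorem2 (R : realType) (dT : measure_display) (T : measurableType dT)
  (P : probability T R) (A X : nat -> T -> bool)
  (p : R) (d : nat) (gamma delta eps : R) :
  0 < p < 1 -> 0 < gamma -> 0 <= delta -> 0 < eps ->
  (* arrivals and erasures are random variables *)
  (forall k, measurable [set w | A k w]) ->
  (forall k, measurable [set w | X k w]) ->
  (* {X_k} i.i.d. with Pr(X_k = 1) = p *)
  (forall (k : nat) (xv : nat -> bool), (1 <= k)%N ->
     let B := [set w | forall j, (1 <= j < k)%N -> X j w = xv j] in
     P ([set w | X k w] `&` B) = (p%:E * P B)%E) ->
  (* X_k independent of the decisions and queue states up to slot k *)
  (forall (k : nat) (sv cv : nat -> bool) (qt qr : nat -> nat), (1 <= k)%N ->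
     let B := [set w | forall j, (1 <= j <= k)%N ->
                 [/\ S_rv p gamma d A X j w = sv j, C_rv p gamma d A X j w = cv j,
                     Qt_rv p gamma d A X j w = qt j & Qr_rv p gamma d A X j w = qr j]] in
     P ([set w | X k w] `&` B) = (p%:E * P B)%E) ->
  (* |hat Q^r_k - Q^r_k| <= delta for all k *)
  (forall k w, (1 <= k)%N ->
     `|Qhat_rv p gamma d A X k w - (Qr_rv p gamma d A X k w)%:R| <= delta) ->
  (* E[S_k | hat Q^r_k] >= eps on the event {hat Q^r_k <= gamma} *)
  (forall k (B : set R), (1 <= k)%N -> measurable B -> B `<=` `]-oo, gamma] ->
     (eps%:E * P (Qhat_rv p gamma d A X k @^-1` B) <=
      \int[P]_(w in Qhat_rv p gamma d A X k @^-1` B)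
          ((S_rv p gamma d A X k w)%:R)%:E)%E) ->
  (* liminf_k E[hat s_k] >= (1-p) - (1/2 + delta + (1+delta)(1-p))/gamma *)
  (((1 - p) - (2^-1 + delta + (1 + delta) * (1 - p)) / gamma)%:E <=
   limn_einf (fun k : nat =>
     \int[P]_w (((k%:R)^-1 * \sum_(1 <= i < k.+1)
                    ((~~ C_rv p gamma d A X i w)%:R : R))%:E)))%E.
Proof.
move=> /andP[p0 p1] g0 dl0 e0 hA hX _ Hind Hd _.
apply: einf_ge => -[//|K] _.
under eq_integral => w _ do rewrite mulr_sumr.
have mev := @meas_ev R dT T A X p gamma d hA hX.
rewrite (@int_sum R dT T P _ (index_iota 1 K.+2) (fun _ => K.+1%:R^-1)
           (fun i w => ~~ C_rv p gamma d A X i w)); first last.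
- by move=> i; exact: (mev i (fun s c x => ~~ c)).
- by move=> _; rewrite invr_ge0.
rewrite lee_fin.
set N := 2^-1 + delta + (1 + delta) * (1 - p).
have N0 : 0 < N / gamma.
  by apply: divr_gt0 => //; rewrite /N; apply: ltr_wpDr;
    [apply: mulr_ge0; lra | lra].
have [gd|gd] := leP delta gamma; last first.
  apply: (@le_trans _ _ 0).
    have : 1 <= N / gamma.
      rewrite ler_pdivlMr // mul1r /N.
      have : 0 <= (1 + delta) * (1 - p) by apply: mulr_ge0; lra.
      lra.
    lra.
  apply: sumr_ge0 => i _; apply: mulr_ge0; first by rewrite invr_ge0.
  by apply: fine_ge0; exact: measure_ge0.
have fE B : measurable B -> P B = (fine (P B))%:E.
  by move=> hB; rewrite fineK //; exact: fin_num_measure.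
pose c i := fine (P [set w | C_rv p gamma d A X i w]).
have notC i : fine (P [set w | ~~ C_rv p gamma d A X i w]) = 1 - c i.
  rewrite (_ : [set w | ~~ _] = ~` [set w | C_rv p gamma d A X i w]); last first.
    by apply/seteqP; split => w /=; case: (C_rv _ _ _ _ _ _ w).
  rewrite probability_setC; last exact: (mev i (fun s c x => c)).
  by rewrite (fE _ (mev i (fun s c x => c))).

have hcX i : (1 <= i)%N ->
    fine (P [set w | C_rv p gamma d A X i w && ~~ X i w]) = (1 - p) * c i.
  move=> i1.
  have h := @indep R dT T P A X p gamma d hA hX Hind i (fun v => (nth d0 v i.-1).1.1.2) i1.
  have eC : [set w | (nth d0 (@Phi' R p gamma d i (A ^~ w) (X ^~ w)) i.-1).1.1.2] =
            [set w | C_rv p gamma d A X i w].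
    by apply/seteqP; split => w /=; rewrite nth_Phi' ?i1 ?leqnn.
  rewrite eC in h.
  have hU : [set w | C_rv p gamma d A X i w] =
     ([set w | X i w] `&` [set w | C_rv p gamma d A X i w]) `|`
     [set w | C_rv p gamma d A X i w && ~~ X i w].
    apply/seteqP; split => w /=.
      by case: (X i w) => Cw; [left|right; rewrite Cw].
    by case=> [[]|/andP[]].
  have E : P [set w | C_rv p gamma d A X i w] =
     (P ([set w | X i w] `&` [set w | C_rv p gamma d A X i w]) +
      P [set w | C_rv p gamma d A X i w && ~~ X i w])%E.
    rewrite {1}hU measureU //.
    - by apply: measurableI => //; exact: (mev i (fun s c x => c)).
    - exact: (mev i (fun s c x => c && ~~ x)).
    - by apply/seteqP; split => w //= [[-> _] /andP[_]].
  move: E.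
  rewrite h (fE _ (mev i (fun s c x => c && ~~ x))) (fE _ (mev i (fun s c x => c))).
  rewrite -EFinM -EFinD => -[]; rewrite /c; lra.
have hsX i : (1 <= i)%N ->
    fine (P [set w | S_rv p gamma d A X i w && X i w]) =
    p * fine (P [set w | S_rv p gamma d A X i w]).
  move=> i1.
  have h := @indep R dT T P A X p gamma d hA hX Hind i (fun v => (nth d0 v i.-1).1.1.1) i1.
  have eS : [set w | (nth d0 (@Phi' R p gamma d i (A ^~ w) (X ^~ w)) i.-1).1.1.1] =
            [set w | S_rv p gamma d A X i w].
    by apply/seteqP; split => w /=; rewrite nth_Phi' ?i1 ?leqnn.
  rewrite eS in h.
  rewrite (_ : [set w | S_rv p gamma d A X i w && X i w] =
     [set w | X i w] `&` [set w | S_rv p gamma d A X i w]); last first.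
    by apply/seteqP; split => w /=; [case/andP => -> -> | case=> -> ->].
  by rewrite h (fE _ (mev i (fun s c x => s))).
have hSC i : (1 <= i)%N -> fine (P [set w | S_rv p gamma d A X i w]) <= 1 - c i.
  case: i => // i _.
  rewrite -notC -lee_fin.
  rewrite -(fE _ (mev i.+1 (fun s c x => s))) -(fE _ (mev i.+1 (fun s c x => ~~ c))).
  apply: le_measure.
  - by rewrite inE; exact: (mev i.+1 (fun s c x => s)).
  - by rewrite inE; exact: (mev i.+1 (fun s c x => ~~ c)).
  by move=> w /=; apply: SkC.
have I1 := @int_sum R dT T P _ (index_iota 1 K.+2) (fun _ => 1)
           (fun i w => C_rv p gamma d A X i w && ~~ X i w) (fun _ => ler01)
           (fun i => mev i (fun s c x => c && ~~ x)).
have I2 := @int_sum R dT T P _ (index_iota 1 K.+2) (fun _ => 1)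
           (fun i w => S_rv p gamma d A X i w && X i w) (fun _ => ler01)
           (fun i => mev i (fun s c x => s && x)).
have ineq : \sum_(1 <= i < K.+2) 1 * fine (P [set w | C_rv p gamma d A X i w && ~~ X i w])
         <= \sum_(1 <= i < K.+2) 1 * fine (P [set w | S_rv p gamma d A X i w && X i w]).
  rewrite -lee_fin -I1 -I2; apply: ge0_le_integral => //.
  - by move=> w _; rewrite lee_fin; apply: sumr_ge0 => i _; rewrite mul1r.
  - apply/measurable_realfun.measurable_EFinP; apply: measurable_sum => i.
    apply: measurable_realfun.measurable_funM => //.
    exact: meas_bool (mev i (fun s c x => c && ~~ x)).
  - apply/measurable_realfun.measurable_EFinP; apply: measurable_sum => i.
    apply: measurable_realfun.measurable_funM => //.
    exact: meas_bool (mev i (fun s c x => s && x)).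
  move=> w _; rewrite lee_fin.
  under eq_bigr => i _ do rewrite mul1r.
  under [X in _ <= X]eq_bigr => i _ do rewrite mul1r.
  rewrite -!natr_sum ler_nat.
  have := leq_addl (Qrk p gamma d (A ^~ w) (X ^~ w) K.+2)
     (\sum_(1 <= i < K.+2) (Ck p gamma d (A ^~ w) (X ^~ w) i && ~~ X i w)).
  by rewrite (@path_sum R p gamma d (A ^~ w) (X ^~ w) delta gd (fun k k1 => Hd k w k1) K.+1).
set Sc := \sum_(1 <= i < K.+2) c i.
have key : (1 - p) * Sc <= p * (K.+1%:R - Sc).
  apply: (le_trans (y := \sum_(1 <= i < K.+2) 1 * fine (P [set w | C_rv p gamma d A X i w && ~~ X i w]))).
    rewrite /Sc mulr_sumr le_eqVlt; apply/orP; left; apply/eqP.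
    by apply: eq_big_nat => i /andP[i1 _]; rewrite mul1r hcX.
  apply: (le_trans ineq).
  apply: (le_trans (y := \sum_(1 <= i < K.+2) p * (1 - c i))).
    apply: ler_sum_nat => i /andP[i1 _]; rewrite mul1r hsX //.
    by apply: ler_wpM2l; [lra | exact: hSC].
  rewrite -mulr_sumr sumrB sumr_const_nat subSS subn0 /Sc.
  by rewrite -[1 *+ K.+1]/(K.+1%:R).
rewrite (eq_big_nat _ _ (F2 := fun i => K.+1%:R^-1 * (1 - c i))); last first.
  by move=> i _; rewrite notC.
rewrite -mulr_sumr sumrB sumr_const_nat subSS subn0 -/Sc.
rewrite -[1 *+ K.+1]/(K.+1%:R).
have k0 : 0 < K.+1%:R :> R by rewrite ltr0n.
apply: (@le_trans _ _ (1 - p)); first lra.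
rewrite mulrC ler_pdivlMr //.
lra.
Qed.
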